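(* Fix $n\ge 1$. Let $T=P(x,u_0,\dots,u_n)$ with $P$ a real polynomial, and let $Q$ be the (unique) real polynomial with $T=Q(x,v_0,\dots,v_n)$. Then $P$ does not depend on $x$ if and only if, on the region $u_n\neq0$, $$T=Q(\xi,I_n,I_{n-1},\dots,I_2,0,I_0),$$ i.e. $T$ is obtained from $Q$ by substituting $x\mapsto\xi$ and $v_j\mapsto I_{n-j}$ (with $I_1=0$). In this case, if $T\ne 0$, the deficiency of $T$ relative to $\mathcal P_n$ equals $n$ minus the degree in $\xi$ of $Q(\xi,I_n,\dots,I_2,0,I_0)$, regarded as a polynomial in the algebraically independent quantities $\xi,I_0,I_2,\dots,I_n$.
   Context: Operators are elements of $\mathbb R[x,u_0,\dots,u_n]$ acting on smooth $f$ by $P[f](x)=P(x,f(x),f'(x),\dots,f^{(n)}(x))$. $\mathcal P_s$ denotes real polynomials of degree $\le s$ ($\mathcal P_s=\{0\}$ for $s<0$); deficiency $m$ relative to $\mathcal P_n$ means $T(\mathcal P_n)\subset\mathcal P_{n-m}$ but $T(\mathcal P_n)\not\subset\mathcal P_{n-m-1}$. Define $v_j=\sum_{i=0}^{n-j}(-1)^i\frac{x^i}{i!}u_{i+j}$ for $j=0,\dots,n$; $x,v_0,\dots,v_n$ freely generate $\mathbb R[x,u_0,\dots,u_n]$. On the region $u_n\ne0$ define $\xi=u_{n-1}/u_n$ and $I_{n-j}=\sum_{i=0}^{n-j}(-1)^i u_{i+j}\frac{\xi^i}{i!}$ for $j=0,\dots,n$; thus $I_0=u_n$ and $I_1=0$.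 *)

(* Defs.v *)
From HB Require Import structures.
From mathcomp Require Import all_boot all_order all_algebra.
From mathcomp Require Import mpoly.
Set Implicit Arguments. Unset Strict Implicit. Unset Printing Implicit Defensive.
Import Order.TTheory GRing.Theory Num.Theory.
Local Open Scope ring_scope.

(* Conventions: an operator T = P(x,u_0,...,u_n) is an element
   P : {mpoly R[n.+2]}; variable 0 is x, variable (i+1) is u_i. *)

Section Defs.
Context (R : realFieldType) (n : nat).

Definition vpoly (j : nat) : {mpoly R[n.+2]} :=
  \sum_(i < (n - j).+1)
     (((-1) ^+ i / (i`!)%:R) *: ('X_ord0 ^+ i * 'X_(inord (i + j).+1))).

Definition vtuple : (n.+2).-tuple {mpoly R[n.+2]} :=
  [tuple if i == ord0 then 'X_ord0 else vpoly (i : nat).-1 | i < n.+2].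

Definition indep_x (P : {mpoly R[n.+2]}) : Prop :=
  forall m, m \in msupp P -> m ord0 = 0%N.

Definition xi (u : 'I_n.+2 -> R) : R := u (inord n) / u (inord n.+1).

Definition Ival (u : 'I_n.+2 -> R) (k : nat) : R :=
  \sum_(i < k.+1) ((-1) ^+ i * u (inord (i + (n - k)).+1) * xi u ^+ i / (i`!)%:R).

(* the point (xi, I_n, I_{n-1}, ..., I_2, 0, I_0): x |-> xi, v_j |-> I_{n-j},
   except v_{n-1} |-> 0 *)
Definition substpt (u : 'I_n.+2 -> R) : 'I_n.+2 -> R :=
  fun i => if i == ord0 then xi u
           else if (i : nat).-1 == n.-1 then 0 else Ival u (n - (i : nat).-1).

Definition applyOp (P : {mpoly R[n.+2]}) (f : {poly R}) (x : R) : R :=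
  P.@[fun i : 'I_n.+2 => if i == ord0 then x else (f^`((i : nat).-1)).[x]].

(* g is (the function of) a polynomial in P_s (degree <= s; P_s = {0} for s < 0) *)
Definition inPs (s : int) (g : R -> R) : Prop :=
  exists p : {poly R}, ((size p)%:Z <= s + 1)%R /\ forall x, g x = p.[x].

Definition maps_Pn_into (P : {mpoly R[n.+2]}) (s : int) : Prop :=
  forall f : {poly R}, (size f <= n.+1)%N -> inPs s (applyOp P f).

Definition deficiency (P : {mpoly R[n.+2]}) (m : int) : Prop :=
  maps_Pn_into P (n%:Z - m) /\ ~ maps_Pn_into P (n%:Z - m - 1).

(* Q(xi, I_n, ..., I_2, 0, I_0) as a polynomial in the n+1 independent
   indeterminates: variable 0 = xi, variable k (1 <= k <= n-1) = I_{n+1-k}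
   (substituted for v_{k-1}), variable n = I_0 (substituted for v_n);
   v_{n-1} is replaced by 0. *)
Definition redtuple : (n.+2).-tuple {mpoly R[n.+1]} :=
  [tuple if (i : nat) == n then 0
         else if (i : nat) == n.+1 then 'X_(inord n) else 'X_(inord i) | i < n.+2].

Definition Qred (Q : {mpoly R[n.+2]}) : {mpoly R[n.+1]} := Q \mPo redtuple.

End Defs.

Definition degIn (R : nzRingType) (k : nat) (p : {mpoly R[k]}) (i : 'I_k) : nat :=
  \max_(m <- msupp p) m i.

(* Main.v *)
Require Import Defs.
From HB Require Import structures.
From mathcomp Require Import all_boot all_order all_algebra.
From mathcomp Require Import mpoly.
From mathcomp Require Import ring zify.
Set Implicit Arguments. Unset Strict Implicit. Unset Printing Implicit Defensive.
Import Order.TTheory GRing.Theory Num.Theory.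
Local Open Scope ring_scope.



Lemma poly_eq0_nz (R : realFieldType) (q : {poly R}) :
  (forall x, x != 0 -> q.[x] = 0) -> q = 0.
Proof.
move=> H; apply/eqP; apply: contraT => nz.
have := max_poly_roots nz (rs := [seq (i.+1)%:R | i <- iota 0 (size q)]).
rewrite size_map size_iota ltnn; apply.
  apply/allP => x /mapP [i _ ->]; apply/rootP; apply: H.
  by rewrite pnatr_eq0.
rewrite map_inj_uniq ?iota_uniq // => i j /eqP; rewrite eqr_nat => /eqP [].
done.
Qed.

Fixpoint kr (N k : nat) : ('I_k -> nat) -> nat :=
  match k with
  | 0 => fun _ => 0%N
  | k'.+1 => fun f => (f ord0 + N * kr N (fun j : 'I_k' => f (lift ord0 j)))%N
  end.

Lemma kr_inj N k (f g : 'I_k -> nat) :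
  (forall i, f i < N)%N -> (forall i, g i < N)%N -> kr N f = kr N g -> f =1 g.
Proof.
elim: k f g => [|k IH] f g Hf Hg /=; first by move=> _ [].
move=> E.
have E0 : f ord0 = g ord0.
  have := congr1 (modn^~ N) E.
  by rewrite /= ![(_ + N * _)%N]addnC ![(N * _)%N]mulnC !modnMDl !modn_small.
have E1 : kr N (fun j : 'I_k => f (lift ord0 j)) = kr N (fun j : 'I_k => g (lift ord0 j)).
  have NP : (0 < N)%N by apply: leq_ltn_trans (Hf ord0).
  have := congr1 (divn^~ N) E.
  by rewrite /= ![(N * _)%N]mulnC !divnDMl // !divn_small // !add0n.
have IH' := IH _ _ (fun j => Hf _) (fun j => Hg _) E1.
move=> i; case: (unliftP ord0 i) => [j ->|->] //; exact: IH'.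
Qed.

Lemma kr_sum N k (f : 'I_k -> nat) : kr N f = (\sum_(i < k) f i * N ^ i)%N.
Proof.
elim: k f => [|k IH] f /=; first by rewrite big_ord0.
rewrite big_ord_recl /= muln1 IH big_distrr /=; congr (_ + _)%N.
by apply: eq_bigr => i _; rewrite /bump /= add1n expnS mulnCA.
Qed.



Lemma mpoly_eq0_nz (R : realFieldType) k (p : {mpoly R[k]}) :
  (forall v : 'I_k -> R, (forall i, v i != 0) -> p.@[v] = 0) -> p = 0.
Proof.
move=> H; apply/eqP; apply: contraT => nz.
set N := msize p.
have bnd : forall m, m \in msupp p -> forall i, (m i < N)%N.
  move=> m mp i; apply: leq_ltn_trans (msize_mdeg_lt mp).
  by rewrite mdegE (bigD1 i) //= leq_addr.
pose q : {poly R} := \sum_(m <- msupp p) p@_m *: 'X^(kr N (fun i => m i)).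
have Hq : forall t, t != 0 -> q.[t] = 0.
  move=> t t0; rewrite -(H (fun i => t ^+ (N ^ i))); last first.
    by move=> i; rewrite expf_neq0.
  rewrite mevalE /q horner_sum; apply: eq_bigr => m _.
  rewrite hornerZ hornerXn; congr (_ * _).
  rewrite kr_sum -prodrXr; apply: eq_bigr => i _; rewrite -exprM mulnC.
  done.
have q0 := poly_eq0_nz Hq.
have [m0 m0p] : exists m0, m0 \in msupp p.
  case E: (msupp p) => [|m0 s]; last by exists m0; rewrite inE eqxx.
  by move/eqP: E; rewrite msupp_eq0 (negbTE nz).
have : q`_(kr N (fun i => m0 i)) = p@_m0.
  rewrite /q coef_sum (bigD1_seq m0) ?msupp_uniq //= coefZ coefXn eqxx mulr1.
  rewrite big_seq_cond big1 ?addr0 // => m /andP [mp nm].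
  rewrite coefZ coefXn; case: eqP => [/esym E|]; last by rewrite mulr0.
  have Em := kr_inj (bnd _ mp) (bnd _ m0p) E.
  have Emm : m = m0 by apply/mnmP => i; exact: Em.
  by rewrite Emm eqxx in nm.
rewrite q0 coef0 => /esym /eqP; rewrite mcoeff_eq0 m0p.
done.
Qed.



Definition upd (R : realFieldType) k (v : 'I_k.+1 -> R) (a : R) : 'I_k.+1 -> R :=
  fun i => if i == ord0 then a else v i.

Definition part (R : realFieldType) k (p : {mpoly R[k.+1]}) (e : nat) : {mpoly R[k.+1]} :=
  \sum_(m <- msupp p | m ord0 == e) p@_m *: 'X_[m].

Lemma upd_upd (R : realFieldType) k (v : 'I_k.+1 -> R) a b : upd (upd v a) b =1 upd v b.
Proof. by move=> i; rewrite /upd; case: eqP. Qed.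

Lemma part_coef (R : realFieldType) k (p : {mpoly R[k.+1]}) e m :
  (part p e)@_m = if m ord0 == e then p@_m else 0.
Proof.
rewrite /part (raddf_sum (mcoeff m)) /=.
under eq_bigr do rewrite mcoeffZ mcoeffX.
rewrite -big_filter.
have [mp|mnp] := boolP (m \in msupp p).
  case: ifP => me.
    rewrite (bigD1_seq m) ?filter_uniq ?msupp_uniq //=; last by rewrite mem_filter me mp.
    rewrite eqxx mulr1 big1 ?addr0 // => m' nm'.
    by case: eqP => [Em|]; rewrite ?mulr0 //; rewrite Em eqxx in nm'.
  rewrite big_seq big1 // => m'; rewrite mem_filter => /andP [m'e _].
  by case: eqP => [Em|]; rewrite ?mulr0 //; move: m'e; rewrite Em me.
rewrite big_seq big1; last first.
  move=> m'; rewrite mem_filter => /andP [_ m'p].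
  by case: eqP => [Em|]; rewrite ?mulr0 //; move: m'p; rewrite Em (negbTE mnp).
by move: mnp; rewrite -mcoeff_eq0 => /eqP ->; case: ifP.
Qed.

Lemma part_eval (R : realFieldType) k (p : {mpoly R[k.+1]}) e v :
  (part p e).@[v] = \sum_(m <- msupp p | m ord0 == e) p@_m * \prod_i v i ^+ m i.
Proof.
rewrite /part (raddf_sum (meval v)) /=.
by apply: eq_bigr => m _; rewrite mevalZ mevalX.
Qed.

Lemma part_homog (R : realFieldType) k (p : {mpoly R[k.+1]}) e v :
  (part p e).@[v] = v ord0 ^+ e * (part p e).@[upd v 1].
Proof.
rewrite !part_eval mulr_sumr; apply: eq_bigr => m /eqP me.
rewrite !big_ord_recl /upd /= expr1n mul1r me mulrCA.
done.
Qed.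

Lemma part_eq0 (R : realFieldType) k (p : {mpoly R[k.+1]}) e :
  (forall m, m \in msupp p -> m ord0 != e) -> part p e = 0.
Proof.
move=> H; rewrite /part big_seq_cond big1 // => m /andP [mp me].
by rewrite (negbTE (H _ mp)) in me.
Qed.

Lemma part_gt (R : realFieldType) k (p : {mpoly R[k.+1]}) e :
  (degIn p ord0 < e)%N -> part p e = 0.
Proof.
move=> H; apply: part_eq0 => m mp; apply/eqP => me.
have : (m ord0 <= degIn p ord0)%N by rewrite /degIn; exact: (leq_bigmax_seq m mp).
rewrite me leqNgt H; done.
Qed.

Lemma mpoly_parts (R : realFieldType) k (p : {mpoly R[k.+1]}) N :
  (msize p <= N)%N -> p = \sum_(e < N) part p e.
Proof.
move=> HN; apply/mpolyP => m; rewrite (raddf_sum (mcoeff m)) /=.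
under eq_bigr do rewrite part_coef.
case: (ltnP (m ord0) N) => [lt|ge].
  rewrite (bigD1 (Ordinal lt)) //= eqxx big1 ?addr0 // => i ni.
  case: eqP => // E; case/eqP: ni; exact/val_inj.
rewrite big1; last by move=> i _; case: eqP => // E; move: (ltn_ord i); rewrite -E ltnNge ge.
apply/eqP; rewrite mcoeff_eq0; apply: msize_mdeg_ge.
apply: leq_trans HN (leq_trans ge _).
by rewrite mdegE (bigD1 ord0) //= leq_addr.
Qed.

Definition Gx (R : realFieldType) k (p : {mpoly R[k.+1]}) (v : 'I_k.+1 -> R) : {poly R} :=
  \poly_(e < msize p) (part p e).@[upd v 1].

Lemma Gx_horner (R : realFieldType) k (p : {mpoly R[k.+1]}) v x :
  (Gx p v).[x] = p.@[upd v x].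
Proof.
rewrite horner_poly [in RHS](mpoly_parts (leqnn (msize p))) (raddf_sum (meval _)) /=.
apply: eq_bigr => e _; rewrite (part_homog _ _ (upd v x)) mulrC.
rewrite {2}/upd eqxx; congr (_ * _).
by apply: meval_eq => i; rewrite upd_upd.
Qed.

Lemma Gx_coef (R : realFieldType) k (p : {mpoly R[k.+1]}) v e :
  (Gx p v)`_e = (part p e).@[upd v 1].
Proof.
rewrite coef_poly; case: ltnP => // ge.
rewrite part_eq0 ?meval0 // => m mp; apply/eqP => me.
have := msize_mdeg_lt mp; rewrite ltnNge => /negP; apply.
apply: leq_trans ge _; rewrite -me mdegE (bigD1 ord0) //=.
exact: leq_addr.
Qed.

Lemma size_Gx (R : realFieldType) k (p : {mpoly R[k.+1]}) v :
  (size (Gx p v) <= (degIn p ord0).+1)%N.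
Proof. by apply/leq_sizeP => j hj; rewrite Gx_coef part_gt // meval0. Qed.

Lemma bigmax_attained (I : eqType) (r : seq I) (F : I -> nat) :
  r != [::] -> exists2 i, i \in r & F i = (\max_(i <- r) F i)%N.
Proof.
elim: r => [|a r IH] // _; rewrite big_cons.
case: (eqVneq r [::]) => [->|rn].
  by exists a; rewrite ?inE ?eqxx // big_nil maxn0.
have [i ir Fi] := IH rn.
case: (leqP (F a) (\max_(i <- r) F i)) => h.
  exists i; first by rewrite inE ir orbT.
  exact: Fi.
by exists a; rewrite ?inE ?eqxx.
Qed.



Lemma taylorD (R : realFieldType) (g : {poly R}) N x y :
  (size g <= N.+1)%N ->
  g.[x + y] = \sum_(k < N.+1) (g^`(k)).[x] * y ^+ k / (k`!)%:R.
Proof.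
move=> sg; rewrite (@nderiv_taylor_wide R N.+1 g x y (mulrC x y) sg).
apply: eq_bigr => k _; rewrite nderivn_def hornerMn -mulr_natr.
by rewrite mulrAC mulfK // pnatr_eq0 -lt0n fact_gt0.
Qed.

Lemma derivn_addn (R : realFieldType) (f : {poly R}) k j :
  f^`(k + j) = (f^`(j))^`(k).
Proof.
elim: k => [|k IH]; first by rewrite derivn0.
by rewrite addSn !derivnS IH.
Qed.

Lemma size_derivn_le (R : realFieldType) (f : {poly R}) N j :
  (size f <= N.+1)%N -> (size f^`(j) <= (N - j).+1)%N.
Proof.
move=> sf; apply/leq_sizeP => i hi; rewrite coef_derivn nth_default ?mul0rn //.
apply: leq_trans sf _; lia.
Qed.

Lemma vpoly_eval (R : realFieldType) n j (u : 'I_n.+2 -> R) :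
  (vpoly R n j).@[u] =
  \sum_(i < (n - j).+1) ((-1) ^+ i / (i`!)%:R) * (u ord0 ^+ i * u (inord (i + j).+1)).
Proof.
rewrite /vpoly (raddf_sum (meval u)) /=.
by apply: eq_bigr => i _; rewrite mevalZ mevalM rmorphXn /= !mevalXU.
Qed.

Definition cpt (R : realFieldType) n (f : {poly R}) : 'I_n.+2 -> R :=
  fun i => (f^`((i : nat).-1)).[0].

Lemma applyOpE (R : realFieldType) n (P Q : {mpoly R[n.+2]}) (f : {poly R}) (x : R) :
  P = Q \mPo vtuple R n -> (size f <= n.+1)%N ->
  applyOp P f x = Q.@[upd (@cpt R n f) x].
Proof.
move=> HP sf; rewrite /applyOp HP comp_mpoly_meval; apply: meval_eq => i.
rewrite tnth_mktuple /upd /cpt.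
have [Ei|ni] := eqVneq i ord0.
  subst i.
  by rewrite mevalXU eqxx.
have jn : ((i : nat).-1 <= n)%N by have := ltn_ord i; case: (i : nat).
rewrite vpoly_eval eqxx.
have := taylorD x (- x) (size_derivn_le ((i : nat).-1) sf).
rewrite addrN => ->; apply: eq_bigr => k _.
have hk : ((k + (i : nat).-1).+1 < n.+2)%N.
  have := ltn_ord k; lia.
rewrite (_ : (inord (k + (i : nat).-1).+1 == ord0) = false); last first.
  by apply/negbTE; apply/eqP => /(congr1 val); rewrite /= inordK.
rewrite inordK //= -derivn_addn (exprNn x); ring.
Qed.



Lemma upd0 (R : realFieldType) k (v : 'I_k.+1 -> R) a : upd v a ord0 = a.
Proof. by rewrite /upd eqxx. Qed.

Lemma upd_inord (R : realFieldType) k (v : 'I_k.+1 -> R) a j :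
  (0 < j < k.+1)%N -> upd v a (inord j) = v (inord j).
Proof.
move=> /andP [j0 jk]; rewrite /upd; case: eqP => // /(congr1 val).
by rewrite /= inordK // => E; rewrite E in j0.
Qed.

Lemma inord_eq0F k j : (0 < j < k.+1)%N -> (inord j == ord0 :> 'I_k.+1) = false.
Proof.
move=> /andP [j0 jk]; apply/eqP => /(congr1 val).
by rewrite /= inordK // => E; rewrite E in j0.
Qed.

Lemma substptE (R : realFieldType) n (P Q : {mpoly R[n.+2]}) (u : 'I_n.+2 -> R) :
  (1 <= n)%N -> P = Q \mPo vtuple R n -> u (inord n.+1) != 0 ->
  Q.@[substpt u] = P.@[upd u (xi u)].
Proof.
move=> n1 HP un; rewrite HP comp_mpoly_meval; apply: meval_eq => i.
rewrite tnth_mktuple /substpt.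
have [Ei|ni] := eqVneq i ord0.
  by subst i; rewrite mevalXU upd0.
have jn : ((i : nat).-1 <= n)%N by have := ltn_ord i; case: (i : nat).
rewrite vpoly_eval upd0.
case: (eqVneq (i : nat).-1 n.-1) => [Ej|nj].
  rewrite Ej (_ : (n - n.-1 = 1)%N); last by lia.
  rewrite big_ord_recr big_ord_recr big_ord0 /=.
  rewrite /upd !inord_eq0F; [|lia|lia].
  rewrite (_ : (0 + n.-1).+1 = n)%N; last by lia.
  rewrite (_ : (1 + n.-1).+1 = n.+1)%N; last by lia.
  rewrite /xi (_ : 0`! = 1)%N // (_ : 1`! = 1)%N // !expr0 !expr1 !divr1 !mul1r add0r.
  by rewrite mulN1r divfK // subrr.
rewrite /Ival subKn //; apply: eq_bigr => k _.
rewrite /upd inord_eq0F; last by have := ltn_ord k; lia.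
ring.
Qed.



Lemma indep_eval (R : realFieldType) k (p : {mpoly R[k.+1]}) v a :
  (forall m, m \in msupp p -> m ord0 = 0%N) -> p.@[upd v a] = p.@[v].
Proof.
move=> H; rewrite !mevalE; apply: eq_big_seq => m mp; congr (_ * _).
rewrite !big_ord_recl (H m mp) !expr0; congr (_ * _).
Qed.

Lemma part0_eval (R : realFieldType) k (p : {mpoly R[k.+1]}) v :
  (part p 0).@[v] = p.@[upd v 0].
Proof.
rewrite [in RHS](mpoly_parts (leqnSn (msize p))) [in RHS](raddf_sum (meval _)) /=.
rewrite big_ord_recl big1 ?addr0; last first.
  by move=> i _; rewrite (part_homog _ _ (upd v 0)) upd0 expr0n /= mul0r.
rewrite [LHS]part_homog [RHS]part_homog !expr0 !mul1r.
by apply: meval_eq => i; rewrite upd_upd.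
Qed.

Lemma part1 (R : realFieldType) n (P Q : {mpoly R[n.+2]}) :
  (1 <= n)%N -> P = Q \mPo vtuple R n ->
  (indep_x P <->
     (forall u : 'I_n.+2 -> R, u (inord n.+1) != 0 -> P.@[u] = Q.@[substpt u])).
Proof.
move=> n1 HP; split.
  by move=> Hi u un; rewrite (substptE n1 HP un) indep_eval.
move=> H.
have H0 : forall u : 'I_n.+2 -> R, u (inord n.+1) != 0 -> P.@[u] = P.@[upd u 0].
  move=> u un.
  have un' : (upd u 0) (inord n.+1) != 0 by rewrite /upd inord_eq0F; [done|lia].
  rewrite (H u un) (H _ un') (substptE n1 HP un) (substptE n1 HP un').
  have -> : xi (upd u 0) = xi u by rewrite /xi /upd !inord_eq0F //; lia.
  by apply: meval_eq => i; rewrite upd_upd.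
have E : P = part P 0.
  apply/eqP; rewrite -subr_eq0; apply/eqP; apply: mpoly_eq0_nz => v vnz.
  by rewrite mevalB part0_eval -H0 ?subrr.
move=> m; rewrite mcoeff_msupp {1}E part_coef.
move=> H1; move: H1; case: (m ord0 =P 0%N) => // _; by rewrite eqxx.
Qed.



Definition fc (R : realFieldType) n (c : 'I_n.+2 -> R) : {poly R} :=
  \poly_(j < n.+1) (c (inord j.+1) / (j`!)%:R).

Lemma fc_cpt (R : realFieldType) n (c : 'I_n.+2 -> R) i :
  i != ord0 -> @cpt R n (fc c) i = c i.
Proof.
move=> ni; have i0 : (0 < i)%N by rewrite lt0n; apply: contra ni => /eqP E; apply/eqP/val_inj.
rewrite /cpt horner_coef0 coef_derivn addn0 coef_poly ffactnn.
have -> : ((i : nat).-1 < n.+1)%N by have := ltn_ord i; lia.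
rewrite -[_ *+ _]mulr_natr divfK ?pnatr_eq0 -?lt0n ?fact_gt0 //.
by rewrite prednK // inord_val.
Qed.

Lemma applyOp_Gx (R : realFieldType) n (P Q : {mpoly R[n.+2]}) (f : {poly R}) (x : R) :
  P = Q \mPo vtuple R n -> (size f <= n.+1)%N ->
  applyOp P f x = (Gx Q (@cpt R n f)).[x].
Proof. by move=> HP sf; rewrite (applyOpE x HP sf) Gx_horner. Qed.

Lemma applyOp_fc (R : realFieldType) n (P Q : {mpoly R[n.+2]}) (c : 'I_n.+2 -> R) x :
  P = Q \mPo vtuple R n -> applyOp P (fc c) x = (Gx Q c).[x].
Proof.
move=> HP; rewrite (applyOpE x HP (size_poly _ _)) Gx_horner.
by apply: meval_eq => i; rewrite /upd; case: eqP => // /eqP ni; rewrite fc_cpt.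
Qed.

Lemma Qred_eval (R : realFieldType) n (Q : {mpoly R[n.+2]}) (w : 'I_n.+1 -> R) :
  (Qred Q).@[w] = Q.@[fun i : 'I_n.+2 => if (i : nat) == n then 0
                    else if (i : nat) == n.+1 then w (inord n) else w (inord i)].
Proof.
rewrite /Qred comp_mpoly_meval; apply: meval_eq => i; rewrite tnth_mktuple.
case: ifP => _; first by rewrite meval0.
by case: ifP => _; rewrite mevalXU.
Qed.



Lemma inord_val0 k : (inord 0 : 'I_k.+1) = ord0.
Proof. by apply/val_inj; rewrite /= inordK. Qed.

Lemma U1 (R : realFieldType) n (P Q : {mpoly R[n.+2]}) (f : {poly R}) :
  (1 <= n)%N -> P = Q \mPo vtuple R n -> indep_x P ->
  (size f <= n.+1)%N -> f^`(n).[0] != 0 ->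
  exists p : {poly R}, (size p <= (degIn (Qred Q) ord0).+1)%N /\
                       forall x, applyOp P f x = p.[x].
Proof.
move=> n1 HP Hi sf cn0.
set cn := f^`(n).[0].
have Hc : forall x, f^`(n).[x] = cn.
  move=> x; rewrite /cn; have := size_derivn_le n sf; rewrite subnn => /size1_polyC ->.
  by rewrite !hornerC.
set s := f^`(n.-1).[0] / cn.
have Hlin : forall x, f^`(n.-1).[x] = f^`(n.-1).[0] + cn * x.
  move=> x; rewrite -{1}(add0r x) (taylorD 0 x (size_derivn_le n.-1 sf)).
  rewrite (_ : (n - n.-1 = 1)%N); last by lia.
  rewrite big_ord_recr big_ord_recr big_ord0 /= add0r.
  rewrite -derivnS prednK // -/cn.
  rewrite (_ : 0`! = 1)%N // (_ : 1`! = 1)%N // expr0 expr1 !divr1 mulr1 mulrC.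
  done.
pose w : 'I_n.+1 -> R := fun k => if (k : nat) == n then f^`(n).[-s]
                                   else f^`((k : nat).-1).[-s].
exists ((Gx (Qred Q) w) \Po ('X + s%:P)); split.
  apply: leq_trans (size_comp_poly_leq _ _) _.
  rewrite size_XaddC muln1; have := size_Gx (Qred Q) w; lia.
move=> x; rewrite horner_comp !hornerE Gx_horner.
pose g : 'I_n.+2 -> R := fun i => f^`((i : nat).-1).[x].
have -> : applyOp P f x = P.@[upd g x] by [].
have gn : upd g x (inord n.+1) != 0.
  by rewrite /upd inord_eq0F /g ?inordK ?Hc //; lia.
have Hxi : xi (upd g x) = x + s.
  rewrite /xi /upd !inord_eq0F /g ?inordK; try lia.
  by rewrite Hc Hlin /s; field.
rewrite -(indep_eval (upd g x) (xi (upd g x)) Hi) -(substptE n1 HP gn) Qred_eval.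
apply: meval_eq => i; rewrite /substpt Hxi.
have [Ei|ni] := eqVneq i ord0.
  subst i => /=.
  rewrite (_ : (0 == n)%N = false); last by apply/negbTE; rewrite eq_sym -lt0n.
  by rewrite inord_val0 upd0.
have i0 : (0 < i)%N by rewrite lt0n; apply: contra ni => /eqP E; apply/eqP/val_inj.
have jn : ((i : nat).-1 <= n)%N by have := ltn_ord i; lia.
have HI : Ival (upd g x) (n - (i : nat).-1) = f^`((i : nat).-1).[-s].
  rewrite /Ival subKn // Hxi.
  have := taylorD x (- (x + s)) (size_derivn_le ((i : nat).-1) sf).
  rewrite (_ : x + - (x + s) = - s); last by ring.
  move=> ->; apply: eq_bigr => k _.
  rewrite /upd inord_eq0F; last by have := ltn_ord k; lia.
  rewrite /g inordK /=; last by have := ltn_ord k; lia.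
  by rewrite -derivn_addn (exprNn (x + s)); ring.
case: (eqVneq (i : nat) n) => [Ein|nin].
  by rewrite Ein !eqxx.
rewrite (_ : ((i : nat).-1 == n.-1) = false); last by apply/negbTE; lia.
rewrite HI.
case: (eqVneq (i : nat) n.+1) => [Ein1|nin1].
  rewrite /upd inord_eq0F; last by lia.
  by rewrite /w inordK // eqxx Ein1.
rewrite /upd inord_eq0F; last by have := ltn_ord i; lia.
rewrite /w inordK; last by have := ltn_ord i; lia.
by rewrite (negbTE nin).
Qed.



Lemma ord_neq0 k (i : 'I_k.+1) : i != ord0 -> (0 < i)%N.
Proof. by move=> ni; rewrite lt0n; apply: contra ni => /eqP E; apply/eqP/val_inj. Qed.

Unset Implicit Arguments. Set Strict Implicit.

Theorem mainTheorem2 (R : realFieldType) (n : nat) (P Q : {mpoly R[n.+2]}) :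
  (1 <= n)%N ->
  P = Q \mPo vtuple R n ->
  (indep_x P <->
     (forall u : 'I_n.+2 -> R, u (inord n.+1) != 0 -> P.@[u] = Q.@[substpt u]))
  /\
  (indep_x P -> P != 0 ->
     deficiency P (n%:Z - (degIn (Qred Q) ord0)%:Z)).
Proof.
move=> n1 HP; split; first exact: part1.
move=> Hi P0.
set d := degIn (Qred Q) ord0.
rewrite /deficiency (_ : n%:Z - (n%:Z - d%:Z) = d%:Z); last by ring.
have fcn : forall c : 'I_n.+2 -> R, (fc c)^`(n).[0] = c (inord n.+1).
  move=> c; have := @fc_cpt R n c (inord n.+1).
  rewrite /cpt inordK // inord_eq0F; last by lia.
  by move=> ->.
split.
  have Hpart : forall e, (d < e)%N -> part Q e = 0.
    move=> e de; apply: mpoly_eq0_nz => c cnz.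
    have c0 : c (inord n.+1) != 0 := cnz _.
    have c0' : (fc c)^`(n).[0] != 0 by rewrite fcn.
    have [p [sp Hp]] := U1 n1 HP Hi (size_poly _ _) c0'.
    have EG : Gx Q c = p.
      apply/eqP; rewrite -subr_eq0; apply/eqP; apply: poly_eq0_nz => x _.
      by rewrite hornerD hornerN -(applyOp_fc c x HP) Hp subrr.
    rewrite part_homog -Gx_coef EG nth_default ?mulr0 //.
    by apply: leq_trans sp de.
  move=> f sf; exists (Gx Q (@cpt R n f)); split; last first.
    by move=> x; exact: applyOp_Gx.
  have : (size (Gx Q (@cpt R n f)) <= d.+1)%N.
    by apply/leq_sizeP => j hj; rewrite Gx_coef Hpart // meval0.
  by move=> h; rewrite -PoszD lez_nat addn1.
move=> H.
have QrN : Qred Q != 0.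
  apply/eqP => Q0; move/negP: P0; apply; apply/eqP; apply: mpoly_eq0_nz => u unz.
  rewrite ((part1 n1 HP).1 Hi u (unz _)).
  pose w : 'I_n.+1 -> R := fun k => if (k : nat) == n then substpt u (inord n.+1)
                                    else substpt u (inord k).
  have -> : Q.@[substpt u] = (Qred Q).@[w]; last by rewrite Q0 meval0.
  rewrite Qred_eval; apply: meval_eq => i.
  case: (eqVneq (i : nat) n) => [Ein|nin].
    rewrite /substpt.
    have ni : i != ord0 by apply/eqP => E; rewrite E /= in Ein; lia.
    by rewrite (negbTE ni) Ein eqxx.
  case: (eqVneq (i : nat) n.+1) => [Ein1|nin1].
    rewrite /w inordK // eqxx; congr (substpt u _); apply/val_inj.
    by rewrite /= inordK.
  rewrite /w inordK; last by have := ltn_ord i; lia.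
  by rewrite (negbTE nin) inord_val.
have [m mp md] : exists2 m, m \in msupp (Qred Q) & m ord0 = d.
  apply: bigmax_attained; by rewrite msupp_eq0.
have partN : part (Qred Q) d != 0.
  apply/eqP => /(congr1 (mcoeff m)); rewrite part_coef md eqxx mcoeff0 => /eqP.
  by rewrite mcoeff_eq0 mp.
move/negP: partN; apply; apply/eqP; apply: mpoly_eq0_nz => w wnz.
pose c : 'I_n.+2 -> R := fun i => if (i : nat) == n then 0
   else if (i : nat) == n.+1 then w (inord n) else w (inord i).
have [p [sp Hp]] := H (fc c) (size_poly _ _).
have EG : Gx (Qred Q) w = p.
  apply/eqP; rewrite -subr_eq0; apply/eqP; apply: poly_eq0_nz => x _.
  rewrite hornerD hornerN -Hp (applyOp_fc c x HP) !Gx_horner Qred_eval.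
  rewrite [X in X - _](_ : _ = Q.@[upd c x]) ?subrr //.
  apply: meval_eq => i.
  have [Ei|ni] := eqVneq i ord0.
    subst i; rewrite upd0 /=.
    rewrite (_ : (0 == n)%N = false); last by apply/negbTE; rewrite eq_sym -lt0n.
    by rewrite inord_val0 upd0.
  have i0 := ord_neq0 ni.
  rewrite /upd (negbTE ni) /c.
  case: (eqVneq (i : nat) n) => // nin.
  case: (eqVneq (i : nat) n.+1) => [Ein1|nin1].
    by rewrite inord_eq0F //; lia.
  by rewrite inord_eq0F //; have := ltn_ord i; lia.
rewrite part_homog -Gx_coef EG nth_default ?mulr0 //.
have : ((size p)%:Z <= d%:Z) by move: sp; rewrite subrK.
by rewrite lez_nat.
Qed.
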